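(* Let $n\ge 2$, let $\beta\in B_n$ be a half-twist with $\pi(\beta)=(i,j)$, $i\neq j$, and let $k\ge 1$ be an integer. Then for every braid word $w$ representing $\beta^{2k}$ and all distinct $s,t\in\{1,\dots,n\}$, $$cr_{w}(s,t)=\begin{cases}k & \text{if } \{s,t\}=\{i,j\},\\ 0&\text{otherwise.}\end{cases}$$
   Context: $B_n$ is Artin's braid group with generators $\sigma_1,\dots,\sigma_{n-1}$; $\pi:B_n\to S_n$ is the homomorphism with $\pi(\sigma_i)=(i,i+1)$. A half-twist is an element of the conjugacy class of $\sigma_1$. Crossing index: let $w=\sigma_{i_1}^{e_1}\cdots\sigma_{i_l}^{e_l}$ ($e_r\in\{\pm1\}$) be a braid word; label the strings by their starting positions $1,\dots,n$, and track their positions as the letters are read left to right, each letter $\sigma_p^{\pm1}$ exchanging the strings currently at positions $p$ and $p+1$. By convention, in the letter $\sigma_p^{e}$ the string currently at position $p$ passes under the string currently at position $p+1$ if $e=1$, and the string at position $p+1$ passes under the one at position $p$ if $e=-1$. For distinct strings $s,t$, $cr_w(s,t)$ is the sum of the exponents $e_r$ over all letters of $w$ in which string $s$ passes under string $t$. *)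

(* Defs.v *)
From mathcomp Require Import all_boot all_order all_algebra.
Set Implicit Arguments. Unset Strict Implicit. Unset Printing Implicit Defensive.
Import GRing.Theory Num.Theory.
Local Open Scope ring_scope.

(* A letter (p, e) is sigma_p^{+1} if e = true and sigma_p^{-1} if e = false;
   generator indices are 1-based as in the paper. *)
Definition letter := (nat * bool)%type.
Definition bword := seq letter.

Definition sig (p : nat) : letter := (p, true).

Definition valid_word (n : nat) (w : bword) : bool :=
  all (fun l : letter => (0 < l.1 < n)%N) w.

Definition winv (w : bword) : bword := rev (map (fun l : letter => (l.1, ~~ l.2)) w).

Inductive brel (n : nat) : bword -> bword -> Prop :=
| brel_cancel p e : (0 < p < n)%N -> brel n [:: (p, e); (p, ~~ e)] [::]
| brel_far p q : (0 < p < n)%N -> (0 < q < n)%N -> (p.+1 < q)%N ->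
    brel n [:: sig p; sig q] [:: sig q; sig p]
| brel_braid p : (0 < p)%N -> (p.+1 < n)%N ->
    brel n [:: sig p; sig p.+1; sig p] [:: sig p.+1; sig p; sig p.+1].

(* equality in B_n of the elements represented by two words: the congruence
   (equivalence closed under concatenation contexts) generated by brel *)
Inductive beq (n : nat) : bword -> bword -> Prop :=
| beq_rel u v a b : brel n a b -> beq n (u ++ a ++ v) (u ++ b ++ v)
| beq_refl w : beq n w w
| beq_sym w1 w2 : beq n w1 w2 -> beq n w2 w1
| beq_trans w1 w2 w3 : beq n w1 w2 -> beq n w2 w3 -> beq n w1 w3.

Definition wpow (w : bword) (k : nat) : bword := flatten (nseq k w).

(* b represents a half-twist: an element conjugate to sigma_1 *)
Definition half_twist (n : nat) (b : bword) : Prop :=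
  exists u : bword, valid_word n u /\ beq n b (u ++ [:: sig 1] ++ winv u).

(* state: position -> label (starting position) of the string currently there *)
Definition swap_at (f : nat -> nat) (p : nat) : nat -> nat :=
  fun x => if x == p then f p.+1 else if x == p.+1 then f p else f x.

Definition final_state (w : bword) : nat -> nat :=
  foldl (fun f (l : letter) => swap_at f l.1) id w.

Definition perm_is_transp (n : nat) (b : bword) (i j : nat) : Prop :=
  final_state b i = j /\ final_state b j = i /\
  forall x, (0 < x <= n)%N -> x != i -> x != j -> final_state b x = x.

(* crossing index: sum of exponents of letters in which string s passes under
   string t, with the convention of the paper *)
Fixpoint cr_aux (f : nat -> nat) (w : bword) (s t : nat) : int :=
  match w with
  | [::] => 0
  | (p, e) :: w' =>
      let a := f p in let b := f p.+1 in
      let c : int := if e then (if (a == s) && (b == t) then 1 else 0)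
                     else (if (b == s) && (a == t) then -1 else 0) in
      c + cr_aux (swap_at f p) w' s t
  end.

Definition cr (w : bword) (s t : nat) : int := cr_aux id w s t.

(* Main.v *)
Require Import Defs.
From mathcomp Require Import all_boot all_order all_algebra.
From mathcomp Require Import zify ring.
From Stdlib Require Import FunctionalExtensionality.
Import GRing.Theory Num.Theory.
Local Open Scope ring_scope.

Lemma swap_p f p : swap_at f p p = f p.+1.
Proof. by rewrite /swap_at eqxx. Qed.
Lemma swap_p1 f p : swap_at f p p.+1 = f p.
Proof. rewrite /swap_at eqxx; have -> : (p.+1 == p) = false by lia. by []. Qed.
Lemma swap_o f p x : x <> p -> x <> p.+1 -> swap_at f p x = f x.
Proof. move=> h1 h2; rewrite /swap_at; case: eqP => // _; case: eqP => //. Qed.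

Definition fin (f : nat -> nat) (w : bword) := foldl (fun f (l : letter) => swap_at f l.1) f w.

Lemma fin_cons f p e w : fin f ((p,e)::w) = fin (swap_at f p) w.
Proof. by []. Qed.
Lemma fin_cat f u v : fin f (u ++ v) = fin (fin f u) v.
Proof. by rewrite /fin foldl_cat. Qed.

Definition cc (f : nat -> nat) (l : letter) s t : int :=
  let a := f l.1 in let b := f l.1.+1 in
  if l.2 then (if (a == s) && (b == t) then 1 else 0)
  else (if (b == s) && (a == t) then -1 else 0).

Lemma cr_cons f l w s t : cr_aux f (l :: w) s t = cc f l s t + cr_aux (swap_at f l.1) w s t.
Proof. by case: l. Qed.

Lemma cr_cat f u v s t : cr_aux f (u ++ v) s t = cr_aux f u s t + cr_aux (fin f u) v s t.
Proof.
elim: u f => [|[p e] u IH] f; first by rewrite /= add0r.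
by rewrite cat_cons !cr_cons IH addrA.
Qed.

Lemma swap_inv f p : swap_at (swap_at f p) p = f.
Proof.
apply: functional_extensionality => x.
rewrite /swap_at; case: (eqVneq x p) => [->|h1]; first by rewrite eqxx; have -> : (p.+1 == p) = false by lia.
case: (eqVneq x p.+1) => [->|h2] //; by rewrite eqxx.
Qed.
Lemma winv_cons l u : winv (l :: u) = winv u ++ [:: (l.1, ~~ l.2)].
Proof. by rewrite /winv /= rev_cons cats1. Qed.
Lemma winvK u : winv (winv u) = u.
Proof. by rewrite /winv map_rev revK -map_comp map_id_in // => -[p e] _ /=; rewrite negbK. Qed.

Lemma fin_winv f u : fin (fin f u) (winv u) = f.
Proof.
elim: u f => [|[p e] u IH] f //; rewrite winv_cons.
by rewrite fin_cat fin_cons IH; exact: swap_inv.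
Qed.

Lemma cr_winv f u s t : cr_aux (fin f u) (winv u) s t = - cr_aux f u s t.
Proof.
elim: u f => [|[p e] u IH] f //.
rewrite winv_cons cr_cat fin_cons IH fin_winv cr_cons /= addr0 /cc /= swap_p swap_p1.
by case: e => /=; case: ifP => _; rewrite opprD ?opprK addrC.
Qed.

Definition Pe (w1 w2 : bword) := forall f, fin f w1 = fin f w2 /\ forall s t, cr_aux f w1 s t = cr_aux f w2 s t.

Lemma Pe_refl w : Pe w w. Proof. by []. Qed.
Lemma Pe_sym w1 w2 : Pe w1 w2 -> Pe w2 w1.
Proof. by move=> h f; have [h1 h2] := h f; split => // s t; rewrite h2. Qed.
Lemma Pe_trans w1 w2 w3 : Pe w1 w2 -> Pe w2 w3 -> Pe w1 w3.
Proof.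
move=> h h' f; have [h1 h2] := h f; have [h1' h2'] := h' f.
by split => [|s t]; rewrite ?h1 ?h2.
Qed.
Lemma Pe_cat w1 w2 x1 x2 : Pe w1 w2 -> Pe x1 x2 -> Pe (w1 ++ x1) (w2 ++ x2).
Proof.
move=> h h' f; have [h1 h2] := h f.
split => [|s t].
  by rewrite !fin_cat h1; have [] := h' (fin f w2).
by rewrite !cr_cat h1 h2; have [_ ->] := h' (fin f w2).
Qed.

Lemma sA g p : swap_at g p.+1 p = g p.
Proof. rewrite swap_o //; lia. Qed.
Lemma sB g p : swap_at g p p.+2 = g p.+2.
Proof. rewrite swap_o //; lia. Qed.

Lemma Pe_brel n a b : brel n a b -> Pe a b.
Proof.
case=> [p e _|p q _ _ hpq|p _ _] f.
- split; first by rewrite /= swap_inv.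
  move=> s t; rewrite !cr_cons /cc /= swap_p swap_p1.
  by case: e => /=; case: ifP => _; rewrite ?addr0 ?subrr.
- split.
    rewrite /fin /=; apply: functional_extensionality => x.
    rewrite /swap_at; repeat case: eqP => ? //; subst; lia.
  move=> s t; rewrite !cr_cons /cc /= !swap_o; try lia.
- split.
    rewrite /fin /=; apply: functional_extensionality => x.
    rewrite /swap_at; repeat case: eqP => ? //; subst; lia.
  move=> s t; rewrite !cr_cons /cc /= !(sA, sB, swap_p, swap_p1) !addr0; ring.
Qed.

Lemma Pe_beq n w1 w2 : beq n w1 w2 -> Pe w1 w2.
Proof.
elim=> [u v a b h|w|w1' w2' _ IH|w1' w2' w3' _ IH1 _ IH2].
- apply: Pe_cat; first exact: Pe_refl.
  apply: Pe_cat; last exact: Pe_refl.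
  exact: Pe_brel h.
- exact: Pe_refl.
- exact: Pe_sym.
- exact: Pe_trans IH1 IH2.
Qed.

Lemma Pe_cancel u : Pe (winv u ++ u) [::].
Proof.
move=> f; split.
  by rewrite fin_cat -{2}(winvK u) fin_winv.
move=> s t; rewrite cr_cat -{3}(winvK u) cr_winv /= subrr //.
Qed.

Lemma wpow2 w k : wpow w (2 * k) = wpow (w ++ w) k.
Proof.
elim: k => [|k IH] //.
have -> : (2 * k.+1 = (2 * k).+2)%N by lia.
by rewrite /wpow /= -/(wpow w _) IH catA.
Qed.

Lemma Pe_wpow w1 w2 m : Pe w1 w2 -> Pe (wpow w1 m) (wpow w2 m).
Proof.
move=> h; elim: m => [|m IH]; first exact: Pe_refl.
exact: (Pe_cat _ _ _ _ h IH).
Qed.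

Lemma swap_comp f h p : swap_at (f \o h) p = f \o swap_at h p.
Proof.
apply: functional_extensionality => y; rewrite /swap_at /=.
by case: ifP => //; case: ifP.
Qed.

Lemma fin_comp w : forall f h, fin (f \o h) w = f \o fin h w.
Proof.
elim: w => [|[p e] w IH] f h //.
by rewrite !fin_cons swap_comp IH.
Qed.

Lemma fin_id f w x : fin f w x = f (fin id w x).
Proof.
have -> : f = f \o id by [].
by rewrite fin_comp.
Qed.

Definition v2 u := u ++ [:: sig 1; sig 1] ++ winv u.

Lemma Pe_vv u : Pe ((u ++ [:: sig 1] ++ winv u) ++ (u ++ [:: sig 1] ++ winv u)) (v2 u).
Proof.
have -> : (u ++ [:: sig 1] ++ winv u) ++ (u ++ [:: sig 1] ++ winv u)
  = u ++ [:: sig 1] ++ (winv u ++ u) ++ [:: sig 1] ++ winv u by rewrite !catA.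
have -> : v2 u = u ++ [:: sig 1] ++ [::] ++ [:: sig 1] ++ winv u by [].
apply: Pe_cat; first exact: Pe_refl.
apply: Pe_cat; first exact: Pe_refl.
apply: Pe_cat; last exact: Pe_refl.
exact: Pe_cancel.
Qed.

Lemma fin_v2 f u : fin f (v2 u) = f.
Proof.
rewrite /v2 !fin_cat.
have -> : fin (fin f u) [:: sig 1; sig 1] = fin f u by exact: swap_inv.
exact: fin_winv.
Qed.

Lemma cr_v2 f u s t : cr_aux f (v2 u) s t = cr_aux (fin f u) [:: sig 1; sig 1] s t.
Proof.
rewrite /v2 !cr_cat.
have -> : fin (fin f u) [:: sig 1; sig 1] = fin f u by exact: swap_inv.
rewrite cr_winv; ring.
Qed.

Lemma cr_wpow_v2 f u s t k : cr_aux f (wpow (v2 u) k) s t = (k%:Z) * cr_aux (fin f u) [:: sig 1; sig 1] s t.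
Proof.
elim: k => [|k IH]; first by rewrite mul0r.
rewrite /wpow /= -/(wpow _ _) cr_cat fin_v2 IH cr_v2.
rewrite -[k.+1]addn1 PoszD mulrDl mul1r addrC //.
Qed.
Lemma calc (a c s t : nat) (k : int) : a != c ->
  k * ((if (a == s) && (c == t) then 1 else 0) + ((if (c == s) && (a == t) then 1 else 0) + 0)) =
  (if (s == a) && (t == c) || (s == c) && (t == a) then k else 0).
Proof.
move=> hac; rewrite !(eq_sym s) !(eq_sym t).
case: (a =P s) => [<-|h1]; case: (c =P t) => [<-|h2]; rewrite /= ?eqxx /=;
  rewrite ?(negbTE hac) ?(eq_sym c a) ?(negbTE hac) /=; rewrite ?addr0 ?add0r ?mulr1 ?mulr0 //;
  case: (c =P a) => [/esym/eqP|]; rewrite ?(negbTE hac) ?andbF ?mulr0 //; move=> _; by case: ifP; rewrite ?mulr1 ?mulr0.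
Qed.

Theorem lemma3p4 (n : nat) (b : bword) (i j k : nat) :
  (2 <= n)%N -> valid_word n b -> half_twist n b ->
  (0 < i <= n)%N -> (0 < j <= n)%N -> i != j -> perm_is_transp n b i j ->
  (1 <= k)%N ->
  forall w : bword, valid_word n w -> beq n w (wpow b (2 * k)) ->
  forall s t : nat, (0 < s <= n)%N -> (0 < t <= n)%N -> s != t ->
  cr w s t = (if ((s == i) && (t == j)) || ((s == j) && (t == i))
              then (k%:Z) else 0).
Proof.
move=> _ _ [u [_ hb]] _ _ hij [hi [hj _]] _ w _ hw s t _ _ _.
have Pb := Pe_beq _ _ _ hb.
have Pw : Pe w (wpow (v2 u) k).
  apply: Pe_trans (Pe_beq _ _ _ hw) _.
  rewrite wpow2; apply: Pe_wpow.
  apply: Pe_trans (Pe_vv u).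
  exact: (Pe_cat _ _ _ _ Pb Pb).
have -> : cr w s t = cr_aux id (wpow (v2 u) k) s t by rewrite /cr; have [_ ->] := Pw id.
rewrite cr_wpow_v2 /= /cc /= swap_p swap_p1.
set g := fin id u.
set gi := fin id (winv u).
have ggi x : g (gi x) = x.
  by rewrite /g /gi -fin_id fin_winv.
have F x : final_state b x = swap_at g 1 (gi x).
  change (fin id b x = swap_at g 1 (gi x)); have [-> _] := Pb id.
  rewrite !fin_cat; exact: fin_id.
have mem y : final_state b y != y -> (y == g 1) || (y == g 2).
  apply: contraR; case/norP=> h1 h2; rewrite F.
  rewrite swap_o; first by rewrite ggi.
    by move=> e; move: h1; rewrite -{1}(ggi y) e eqxx.
  by move=> e; move: h2; rewrite -{1}(ggi y) e eqxx.
have mi := mem i; rewrite hi eq_sym hij in mi.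
have mj := mem j; rewrite hj hij in mj.
move: (mi isT) (mj isT) hij.
case/orP=> /eqP ->; case/orP=> /eqP ->; rewrite ?eqxx // => h.
  exact: calc.
rewrite calc 1?eq_sym // orbC //.
Qed.
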